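(* Let $m\ge 2$, $2\le k\le m$, $N=\binom{m}{k}$ and $\pi\in\mathbb{R}^m_{>0}$. A discrete choice design $\xi^*$ is locally $D$-optimal (for $\pi$) if and only if (i) $\xi^*\in\Delta_N$, (ii) $R^{-1}SL\,\vec{\Gamma}(\xi^* )\le (m-1)\mathbf{1}$ entrywise, and (iii) $\langle R^{-1}SL\,\vec{\Gamma}(\xi^* )-(m-1)\mathbf{1},\,\xi^*\rangle=0$.
   Context: Discrete choice model: alternatives $[m]$ with parameters $\pi_i>0$; choice sets $C_1,\ldots,C_N$ are all $k$-subsets of $[m]$ in lexicographic order, and in choice set $C_j$ alternative $i$ is chosen with probability $\pi_i/\sum_{s\in C_j}\pi_s$. A design is $\xi=(w_1,\ldots,w_N)\in\Delta_N=\{\xi\in\mathbb{R}^N_{\ge0}:\sum_j w_j=1\}$. Its information matrix $M(\xi)$ is the $m\times m$ symmetric matrix with off-diagonal entries $M_{st}(\xi)=-\pi_s\pi_t\sum_{j:\,s,t\in C_j} w_j/(\sum_{i\in C_j}\pi_i)^2$ and diagonal chosen so all row sums vanish. $M^{(m)}(\xi)$ is $M(\xi)$ with the $m$-th row and column deleted. $\xi^*$ is locally $D$-optimal if it maximizes $\log\det M^{(m)}(\xi)$ over $\xi\in\Delta_N$. $\Sigma^{(m)}(\xi)=M^{(m)}(\xi)^{-1}$ and $\Gamma(\xi)$ is its Farris transform: $\Gamma_{uv}=\Sigma_{uu}+\Sigma_{vv}-2\Sigma_{uv}$ for $u,v<m$, $\Gamma_{um}=\Gamma_{mu}=\Sigma_{uu}$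 for $u<m$, $\Gamma_{mm}=0$; $\vec{\Gamma}=(\Gamma_{uv})_{u<v}$ in lexicographic order of pairs. $S$ is the $N\times\binom{m}{2}$ matrix with $S_{j,(u,v)}=1$ if $u,v\in C_j$ and $0$ otherwise; $R=\mathrm{diag}\big((\sum_{i\in C_j}\pi_i)^2\big)_{j=1}^N$; $L=\mathrm{diag}(\pi_u\pi_v)_{u<v}$ in lexicographic order. $\langle\cdot,\cdot\rangle$ is the standard inner product on $\mathbb{R}^N$. *)

(* Defs.v *)
From HB Require Import structures.
From mathcomp Require Import all_boot all_order all_algebra.
From mathcomp Require Import all_classical all_reals ereal exp.
Set Implicit Arguments. Unset Strict Implicit. Unset Printing Implicit Defensive.
Import Order.TTheory GRing.Theory Num.Theory.
Local Open Scope ring_scope.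

Section DiscreteChoice.
Variable R : realType.
Variables m k : nat.

(* The choice sets: all k-subsets of [m] = 'I_m.  A design is indexed by the
   choice sets themselves (equivalent to indexing by their lexicographic rank). *)
Definition choice_set := {C : {set 'I_m} | #|C| == k}.

Definition upair := {p : 'I_m * 'I_m | (p.1 < p.2)%N}.

Variable pi : 'I_m -> R.

Definition set_weight (C : choice_set) : R := \sum_(i in val C) pi i.

Definition in_simplex (w : choice_set -> R) : Prop :=
  (forall C, 0 <= w C) /\ \sum_C w C = 1.

Definition info_off (w : choice_set -> R) (s t : 'I_m) : R :=
  - (pi s * pi t) *
    \sum_(C : choice_set | (s \in val C) && (t \in val C)) w C / (set_weight C) ^+ 2.

Definition info_mx (w : choice_set -> R) : 'M[R]_m :=
  \matrix_(s, t) (if s == t then - \sum_(t' | t' != s) info_off w s t'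
                  else info_off w s t).

Definition info_red (w : choice_set -> R) : 'M[R]_(m.-1) :=
  \matrix_(i, j) info_mx w (widen_ord (leq_pred m) i) (widen_ord (leq_pred m) j).

Definition logdet_red (w : choice_set -> R) : \bar R :=
  if 0 < \det (info_red w) then (ln (\det (info_red w)))%:E else -oo%E.

Definition locally_D_optimal (w : choice_set -> R) : Prop :=
  in_simplex w /\
  forall w', in_simplex w' -> (logdet_red w' <= logdet_red w)%E.

Definition Sigma_red (w : choice_set -> R) : 'M[R]_(m.-1) := invmx (info_red w).

Definition red_idx (u : 'I_m) : option 'I_(m.-1) := insub (val u).

Definition Gamma (w : choice_set -> R) (u v : 'I_m) : R :=
  let S := Sigma_red w in
  match red_idx u, red_idx v with
  | Some a, Some b => S a a + S b b - 2 * S a b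
  | Some a, None => S a a
  | None, Some b => S b b
  | None, None => 0
  end.

Definition Gamma_vec (w : choice_set -> R) (p : upair) : R :=
  Gamma w (val p).1 (val p).2.

Definition S_mx (C : choice_set) (p : upair) : R :=
  if ((val p).1 \in val C) && ((val p).2 \in val C) then 1 else 0.
Definition R_diag (C : choice_set) : R := (set_weight C) ^+ 2.
Definition L_diag (p : upair) : R := pi (val p).1 * pi (val p).2.

Definition RSLGamma (w : choice_set -> R) (C : choice_set) : R :=
  (R_diag C)^-1 * \sum_(p : upair) S_mx C p * (L_diag p * Gamma_vec w p).

End DiscreteChoice.

(* Main.v *)
Require Import Defs.
From HB Require Import structures.
From mathcomp Require Import all_boot all_order all_algebra.
From mathcomp Require Import all_classical all_reals ereal exp sequences.
From mathcomp Require Import ring lra zify.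
Set Warnings "-notation-overridden,-ambiguous-paths,-deprecated".
Set Implicit Arguments. Unset Strict Implicit. Unset Printing Implicit Defensive.
Import Order.TTheory GRing.Theory Num.Theory.
Local Open Scope ring_scope.
Section Mx.
Variable R : realType.

Definition qf n (A : 'M[R]_n) (x : 'rV[R]_n) : R := (x *m A *m x^T) 0 0.
Definition psd n (A : 'M[R]_n) := A^T = A /\ forall x, 0 <= qf A x.
Definition pd n (A : 'M[R]_n) := A^T = A /\ forall x, x != 0 -> 0 < qf A x.

Lemma bilin_sym n (A : 'M[R]_n) (x y : 'rV[R]_n) : A^T = A ->
  (y *m A *m x^T) 0 0 = (x *m A *m y^T) 0 0.
Proof.
move=> sA; have -> : (y *m A *m x^T) 0 0 = ((y *m A *m x^T)^T) 0 0 by rewrite [RHS]mxE.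
by rewrite !trmx_mul trmxK sA mulmxA.
Qed.

Lemma qfD n (A : 'M[R]_n) x y t : A^T = A ->
  qf A (x + t *: y) = qf A x + 2 * t * (x *m A *m y^T) 0 0 + t ^+ 2 * qf A y.
Proof.
move=> sA; rewrite /qf linearD /= linearZ /= !mulmxDl !mulmxDr -!scalemxAl -!scalemxAr.
have e : y *m A *m x^T = x *m A *m y^T.
  by rewrite [LHS]mx11_scalar [RHS]mx11_scalar bilin_sym.
rewrite e scalerA; set a := x *m A *m x^T; set b := x *m A *m y^T; set c := y *m A *m y^T.
rewrite !mxE; ring.
Qed.

Lemma psd_qf0 n (A : 'M[R]_n) x : psd A -> qf A x = 0 -> x *m A = 0.
Proof.
move=> [sA pA] q0.
set y := x *m A.
have hb : (x *m A *m y^T) 0 0 = \sum_j y 0 j ^+ 2.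
  rewrite -/y mxE. apply: eq_bigr. move=> j _. by rewrite !mxE expr2.
set b := (x *m A *m y^T) 0 0 in hb.
have b0 : 0 <= b by rewrite hb sumr_ge0 // => j _; rewrite sqr_ge0.
have c0 := pA y; set c := qf A y in c0.
have := pA (x + (- (b / (c + 1))) *: y); rewrite qfD // q0 -/b -/c => h.
have c1 : 0 < c + 1 by rewrite ltr_wpDl.
have : b = 0.
  apply/eqP; rewrite eq_le b0 andbT.
  have e : 0 + 2 * - (b / (c + 1)) * b + (- (b / (c + 1))) ^+ 2 * c
      = - (b ^+ 2 * (c + 2)) / (c + 1) ^+ 2.
    by field; rewrite gt_eqF.
  rewrite e in h.
  have : b ^+ 2 * (c + 2) <= 0.
    rewrite -oppr_ge0; move: h; rewrite pmulr_lge0 //.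
    by rewrite invr_gt0 exprn_gt0.
  move=> h2; nra.
rewrite hb => /eqP; rewrite psumr_eq0 => [/allP h0|j _]; last by rewrite sqr_ge0.
apply/rowP => j; have := implyP (h0 j (mem_index_enum j)) isT.
by rewrite sqrf_eq0 [RHS]mxE => /eqP.
Qed.

Lemma psd_unit_pd n (A : 'M[R]_n) : psd A -> A \in unitmx -> pd A.
Proof.
move=> [sA pA] uA; split=> // x x0; rewrite lt_def pA andbT.
apply/negP => /eqP q0; move/negP: x0; apply; apply/eqP.
have := psd_qf0 (conj sA pA) q0 => h.
by rewrite -(mulmxK uA x) h mul0mx.
Qed.


Definition ldl_prop n (A : 'M[R]_n) :=
  exists E : 'M[R]_n, exists d : 'rV[R]_n,
    [/\ \det E = 1, E *m A *m E^T = diag_mx d & forall i, 0 < d 0 i <= A i i].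

Lemma ldl_step n (IH : forall A : 'M[R]_n, pd A -> ldl_prop A)
  (A : 'M[R]_(1 + n)) : pd A -> ldl_prop A.
Proof.
move=> [sA pA].
set ul := ulsubmx A; set ur := ursubmx A; set dl := dlsubmx A; set dr := drsubmx A.
have hA : A = block_mx ul ur dl dr by rewrite submxK.
have [sul sdl sur sdr] : [/\ ul^T = ul, dl^T = ur, ur^T = dl & dr^T = dr].
  by apply/eq_block_mx; rewrite -tr_block_mx -hA.
set a := ul 0 0.
have ha : ul = a%:M by rewrite [LHS]mx11_scalar.
have a0 : 0 < a.
  have nz : row_mx (1 : 'M[R]_1) (0 : 'rV_n) != 0.
    by rewrite row_mx_eq0 negb_and oner_eq0.
  have := pA _ nz; rewrite /qf hA mul_row_block !mul0mx !addr0 !mul1mx tr_row_mx.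
  by rewrite mul_row_col trmx1 trmx0 mulmx0 addr0 mulmx1.
set c := - a^-1 *: dl.
set E1 : 'M[R]_(1 + n) := block_mx 1 0 c 1.
set S := dr - a^-1 *: (dl *m ur).
have hca : c *m ul = - dl.
  by rewrite ha mul_mx_scalar /c scalerA mulrN mulfV ?gt_eqF // scaleN1r.
have hE1 : E1 *m A *m E1^T = block_mx ul 0 0 S.
  rewrite hA /E1 tr_block_mx !mulmx_block !trmx1 !trmx0 !mul0mx !mul1mx !mulmx0 !mulmx1.
  rewrite ?addr0 ?add0r hca ?addNr ?mul0mx ?add0r.
  congr block_mx.
    rewrite ha mul_scalar_mx /c linearZ /= sdl scalerA mulrN mulfV ?gt_eqF //.
    by rewrite scaleN1r addNr.
  by rewrite /S /c -scalemxAl scaleNr addrC.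
have dE1 : \det E1 = 1 by rewrite /E1 det_lblock !det1 mulr1.
have uE1 : E1 \in unitmx by rewrite unitmxE dE1 unitr1.
have pdS : pd S.
  split.
    by rewrite /S linearD /= linearN /= linearZ /= trmx_mul sur sdl sdr.
  move=> x x0.
  set z := row_mx (0 : 'rV[R]_1) x.
  have y0 : z *m E1 != 0.
    apply/negP => /eqP h; move/negP: x0; apply.
    have : z = 0 by rewrite -(mulmxK uE1 z) h mul0mx.
    by move/eqP; rewrite row_mx_eq0 => /andP[_].
  have := pA _ y0; rewrite /qf trmx_mul !mulmxA -(mulmxA z E1 A) -(mulmxA z) -mulmxA.
  rewrite hE1 mulmxA /z mul_row_block !mul0mx ?add0r ?addr0.
  by rewrite mulmx0 tr_row_mx mul_row_col trmx0 mulmx0 add0r.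
have [E' [d' [dE' hE' bd']]] := IH _ pdS.
exists (block_mx 1 0 0 E' *m E1), (row_mx ul d'); split.
- by rewrite det_mulmx dE1 det_lblock det1 dE' !mulr1.
- rewrite trmx_mul.
  have -> : block_mx 1 0 0 E' *m E1 *m A *m (E1^T *m (block_mx 1 0 0 E')^T)
    = block_mx 1 0 0 E' *m (E1 *m A *m E1^T) *m (block_mx 1 0 0 E')^T.
    by rewrite !mulmxA.
  rewrite hE1 tr_block_mx !trmx1 !trmx0.
  rewrite !mulmx_block !mul0mx !mul1mx !mulmx0 !mulmx1 ?addr0 ?add0r.
  rewrite mul0mx hE'.
  rewrite diag_mx_row; congr block_mx.
  by apply/matrixP => i j; rewrite !mxE !ord1 eqxx mulr1n.
- move=> i; case: (split_ordP i) => j ->.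
    rewrite row_mxEl !ord1 -/a.
    by rewrite a0 /= /a /ul !mxE.
  rewrite row_mxEr; have /andP[h1 h2] := bd' j; rewrite h1 /=.
  apply: (le_trans h2).
  rewrite /S !mxE big_ord1 -sdl !mxE -/dr -[X in _ <= X]subr0 lerD2l lerN2.
  by apply: mulr_ge0; [rewrite invr_ge0 ltW | rewrite -expr2 sqr_ge0].
Qed.

Lemma ldl n (A : 'M[R]_n) : pd A -> ldl_prop A.
Proof.
elim: n A => [|n IH] A pdA.
  exists 1, 0; split; first by rewrite det1.
    by apply/matrixP => [[]].
  by case.
exact: (ldl_step IH pdA).
Qed.

Lemma ldl_det n (A : 'M[R]_n) E d : \det E = 1 -> E *m A *m E^T = diag_mx d ->
  \det A = \prod_i d 0 i.
Proof.
move=> dE h; rewrite -det_diag -h !det_mulmx det_tr dE; ring.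
Qed.

Lemma pd_det_gt0 n (A : 'M[R]_n) : pd A -> 0 < \det A.
Proof.
move=> /ldl [E [d [dE h bd]]]; rewrite (ldl_det dE h).
by apply: prodr_gt0 => i _; have /andP[] := bd i.
Qed.

Lemma pd_det_le1 n (A : 'M[R]_n) : pd A -> \tr A <= n%:R -> \det A <= 1.
Proof.
move=> /ldl [E [d [dE h bd]]] htr; rewrite (ldl_det dE h).
apply: (@le_trans _ _ (\prod_i expR (d 0 i - 1))).
  apply: ler_prod => i _; have /andP[h1 _] := bd i; rewrite ltW //=.
  by have := expR_ge1Dx (d 0 i - 1); rewrite addrC subrK.
rewrite -expR_sum expR_le1 sumrB sumr_const card_ord subr_le0.
apply: le_trans htr; rewrite /mxtrace; apply: ler_sum => i _.
by have /andP[] := bd i.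
Qed.

Lemma pd_congr n (A : 'M[R]_n) : pd A ->
  exists P : 'M[R]_n, P \in unitmx /\ P *m A *m P^T = 1%:M.
Proof.
move=> /ldl [E [d [dE h bd]]].
set s : 'rV[R]_n := \row_i (Num.sqrt (d 0 i))^-1.
have hs : forall i, s 0 i * d 0 i * s 0 i = 1.
  move=> i; have /andP[h1 _] := bd i; rewrite /s mxE.
  have sq := sqr_sqrtr (ltW h1); have sp : 0 < Num.sqrt (d 0 i) by rewrite sqrtr_gt0.
  move: sp sq; set r := Num.sqrt (d 0 i) => sp sq; rewrite -sq; field.
  by rewrite gt_eqF.
exists (diag_mx s *m E); split.
  rewrite unitmxE det_mulmx dE mulr1 det_diag unitfE; apply: lt0r_neq0.
  apply: prodr_gt0 => i _; have /andP[h1 _] := bd i.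
  by rewrite /s mxE invr_gt0 sqrtr_gt0.
rewrite trmx_mul tr_diag_mx.
have -> : diag_mx s *m E *m A *m (E^T *m diag_mx s) = diag_mx s *m (E *m A *m E^T) *m diag_mx s.
  by rewrite !mulmxA.
rewrite h !mulmx_diag -diag_const_mx; congr diag_mx; apply/rowP => i.
by move: (hs i); rewrite /s !mxE => ->.
Qed.

Lemma pd_det_le n (A B : 'M[R]_n) : pd A -> pd B ->
  \tr (invmx A *m B) <= n%:R -> \det B <= \det A.
Proof.
move=> pdA pdB htr.
have [P [uP hP]] := pd_congr pdA.
have dA := pd_det_gt0 pdA.
have uA : A \in unitmx by rewrite unitmxE unitfE gt_eqF.
have hinv : invmx A = P^T *m P.
  have h1 : P^T *m P *m A = 1%:M.
    have uPt : P^T \in unitmx by rewrite unitmx_tr.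
    rewrite -[LHS](mulmxK uPt).
    have -> : P^T *m P *m A *m P^T = P^T *m (P *m A *m P^T) by rewrite !mulmxA.
    by rewrite hP mulmx1 mulmxV.
  rewrite -[LHS]mul1mx -h1 -!mulmxA.
  by rewrite mulmxV // mulmx1.
set Y := P *m B *m P^T.
have pdY : pd Y.
  case: pdB => sB pB; split.
    by rewrite /Y !trmx_mul trmxK sB mulmxA.
  move=> x x0.
  have xP0 : x *m P != 0.
    apply/negP => /eqP h0; move/negP: x0; apply; apply/eqP.
    by rewrite -(mulmxK uP x) h0 mul0mx.
  have := pB _ xP0; rewrite /qf /Y trmx_mul !mulmxA.
  by [].
have hY : \det Y <= 1.
  apply: pd_det_le1 => //; apply: le_trans htr.
  rewrite hinv /Y mxtrace_mulC mulmxA mxtrace_mulC mulmxA.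
  by [].
have hdet : \det B = \det Y * \det A.
  have e : \det P * \det A * \det P = 1.
    by have := congr1 determinant hP; rewrite !det_mulmx det_tr det1.
  rewrite /Y !det_mulmx det_tr.
  transitivity (\det B * (\det P * \det A * \det P)); first by rewrite e mulr1.
  ring.
rewrite hdet; rewrite -[X in _ <= X]mul1r ler_wpM2r // ltW //.
Qed.

Lemma char_poly_horner n (A : 'M[R]_n) s : (char_poly A).[s] = \det (s%:M - A).
Proof.
rewrite /char_poly -horner_evalE -det_map_mx; congr determinant.
apply/matrixP => i j; rewrite !mxE /= ?horner_evalE.
by case: (i == j); rewrite /= ?mulr1n ?mulr0n !hornerE.
Qed.

Lemma det_grow n (Z : 'M[R]_n) : 0 < \tr Z ->
  exists t, 0 < t <= 1 /\ 1 < \det (1%:M + t *: Z).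
Proof.
case: n Z => [|n] Z trZ.
  by move: trZ; rewrite /mxtrace big_ord0 ltxx.
set p := char_poly (- Z).
set K := \sum_(i < n) `|p`_i|.
have K0 : 0 <= K by rewrite sumr_ge0 // => i _; rewrite normr_ge0.
set T := \tr Z.
have key : forall t, 0 < t -> t <= 1 -> 1 + t * T - t ^+ 2 * K <= \det (1%:M + t *: Z).
  move=> t t0 t1.
  have -> : 1%:M + t *: Z = t *: (t^-1%:M - (- Z)).
    by rewrite opprK scalerDr scale_scalar_mx mulfV ?gt_eqF.
  rewrite detZ -char_poly_horner -/p horner_coef size_char_poly.
  rewrite big_ord_recr big_ord_recr /=.
  have hp1 : p`_n.+1 = 1.
    have := char_poly_monic (- Z); rewrite -/p => /monicP.
    by rewrite /lead_coef size_char_poly.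
  have hp2 : p`_n = T.
    by rewrite (char_poly_trace (- Z)) // /T linearN /= opprK.
  rewrite hp1 hp2 mul1r !mulrDr.
  have e1 : t ^+ n.+1 * t^-1 ^+ n.+1 = 1 by rewrite -exprMn mulfV ?gt_eqF // expr1n.
  have e2 : t ^+ n.+1 * (T * t^-1 ^+ n) = t * T.
    rewrite exprS mulrCA -mulrA -exprMn mulfV ?gt_eqF // expr1n mulr1; ring.
  rewrite e1 e2.
  suff h : - (t ^+ 2 * K) <= t ^+ n.+1 * \sum_(i < n) p`_i * t^-1 ^+ i by lra.
  rewrite /K !mulr_sumr -sumrN; apply: ler_sum => i _.
  have hi : (i.+2 <= n.+1)%N by rewrite ltnS ltn_ord.
  have ht : t ^+ n.+1 * t^-1 ^+ i = t ^+ 2 * t ^+ (n.+1 - i.+2).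
    rewrite -exprD exprVn -expfB; last by lia.
    congr (t ^+ _); lia.
  rewrite mulrCA ht.
  have hq1 : 0 <= t ^+ (n.+1 - i.+2) := exprn_ge0 _ (ltW t0).
  have hq2 : t ^+ (n.+1 - i.+2) <= 1 := exprn_ile1 _ (ltW t0) t1.
  have t2 : 0 <= t ^+ 2 by rewrite exprn_ge0 // ltW.
  rewrite mulrCA -mulrN ler_wpM2l //.
  have := ler_norm (p`_i); have := ler_norm (- p`_i); rewrite normrN; nra.
set t := T / (T + K + 1).
have hpos : 0 < T + K + 1 by rewrite /T; lra.
have tT : t * (T + K + 1) = T by rewrite /t mulfVK // gt_eqF.
have t0 : 0 < t by rewrite /t divr_gt0.
have t1 : t <= 1 by rewrite /t ler_pdivrMr // mul1r; rewrite /T; lra.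
exists t; split; first by rewrite t0 t1.
apply: lt_le_trans (key t t0 t1).
have : 0 < t ^+ 2 * (T + 1) by rewrite mulr_gt0 ?exprn_gt0 //; rewrite /T; lra.
move: tT; rewrite /T; nra.
Qed.
End Mx.

Section Gen.
Variable R : realType.

Definition lapf (I : finType) (off : I -> I -> R) (s t : I) : R :=
  if s == t then - \sum_(t' | t' != s) off s t' else off s t.

Lemma exch_cond (I : finType) (P : I -> I -> bool) (f : I -> I -> R) :
  \sum_s \sum_(t | P s t) f s t = \sum_t \sum_(s | P s t) f s t.
Proof.
under eq_bigr => s _ do rewrite big_mkcond.
rewrite exchange_big; apply: eq_bigr => t _.
by rewrite [RHS]big_mkcond.
Qed.

Lemma swap_neq (I : finType) (f : I -> I -> R) :
  \sum_s \sum_(t | t != s) f s t = \sum_s \sum_(t | t != s) f t s.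
Proof.
rewrite exch_cond; apply: eq_bigr => s _; apply: eq_bigl => t.
by rewrite eq_sym.
Qed.

Lemma lap_trace (I : finType) (off Sg : I -> I -> R) :
  (forall s t, off s t = off t s) -> (forall s t, Sg s t = Sg t s) ->
  2 * \sum_s \sum_t Sg s t * lapf off t s =
  \sum_s \sum_(t | t != s) (- off s t) * (Sg s s + Sg t t - 2 * Sg s t).
Proof.
move=> so sS.
have h1 : forall s, \sum_t Sg s t * lapf off t s =
    \sum_(t | t != s) off s t * (Sg s t - Sg s s).
  move=> s; rewrite (bigD1 s) //= /lapf eqxx mulrN mulr_sumr -sumrN -big_split /=.
  apply: eq_bigr => t ts; rewrite (negbTE ts) so; ring.
under eq_bigr => s _ do rewrite h1.
have h2 : \sum_s \sum_(t | t != s) off s t * Sg t t =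
          \sum_s \sum_(t | t != s) off s t * Sg s s.
  by rewrite swap_neq; apply: eq_bigr => s _; apply: eq_bigr => t _; rewrite so.
have e : \sum_s \sum_(t | t != s) (- off s t) * (Sg s s + Sg t t - 2 * Sg s t) =
   \sum_s \sum_(t | t != s) (2 * (off s t * (Sg s t - Sg s s))) +
   (\sum_s \sum_(t | t != s) off s t * Sg s s - \sum_s \sum_(t | t != s) off s t * Sg t t).
  rewrite -sumrB -big_split /=; apply: eq_bigr => s _.
  rewrite -sumrB -big_split /=; apply: eq_bigr => t _; ring.
rewrite e h2 subrr addr0 mulr_sumr; apply: eq_bigr => s _.
by rewrite mulr_sumr.
Qed.

Lemma sum_upair m (F : 'I_m * 'I_m -> R) :
  \sum_(p : upair m) F (val p) = \sum_(p : 'I_m * 'I_m | (p.1 < p.2)%N) F p.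
Proof.
rewrite [RHS](reindex_omap (val : upair m -> _) insub); last first.
  by move=> i Pi; rewrite insubT.
apply: eq_bigl => -[i Pi] /=; rewrite insubT /=.
by rewrite Pi eqxx.
Qed.

Lemma upair_sym m (f : 'I_m -> 'I_m -> R) : (forall s t, f s t = f t s) ->
  2 * \sum_(p : upair m) f (val p).1 (val p).2 = \sum_s \sum_(t | t != s) f s t.
Proof.
move=> fs.
rewrite (sum_upair (fun p => f p.1 p.2)) -(pair_big_dep xpredT (fun s t : 'I_m => (s < t)%N) f) /=.
have e : forall s, \sum_(t | t != s) f s t =
   \sum_(t : 'I_m | (s < t)%N) f s t + \sum_(t : 'I_m | (t < s)%N) f s t.
  move=> s; rewrite (bigID (fun t : 'I_m => (s < t)%N)) /=; congr (_ + _).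
    apply: eq_bigl => t; apply/idP/idP => [/andP[]//|h]; rewrite h andbT.
    by apply/eqP => e; move: h; rewrite e ltnn.
  apply: eq_bigl => t; apply/idP/idP => [/andP[ne]|h].
    rewrite -leqNgt => le; rewrite ltn_neqAle le andbT.
    by move: ne; rewrite -val_eqE.
  rewrite -leqNgt (ltnW h) andbT.
  by apply/eqP => e; move: h; rewrite e ltnn.
under [RHS]eq_bigr => s _ do rewrite e.
rewrite big_split /= [X in _ = _ + X]exch_cond.
rewrite [X in _ = _ + X](eq_bigr (fun t : 'I_m => \sum_(s : 'I_m | (t < s)%N) f t s)); last first.
  by move=> t _; apply: eq_bigr => s _; rewrite fs.
by rewrite mulr2n mulrDl mul1r.
Qed.
End Gen.

Section Prob.
Variable R : realType.
Variables n k : nat.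
Variable pi : 'I_n.+1 -> R.
Local Notation CS := (choice_set n.+1 k).

Definition delta (C : CS) : CS -> R := fun C' => (C' == C)%:R.

Lemma info_off_delta C s t : info_off pi (delta C) s t =
  - (pi s * pi t) * ((s \in val C) && (t \in val C))%:R / set_weight pi C ^+ 2.
Proof.
rewrite /info_off -mulrA; congr (_ * _).
case: (boolP ((s \in val C) && (t \in val C))) => hC /=.
  rewrite (bigD1 C) //= /delta eqxx big1 ?addr0 ?mul1r // => C' /andP[_ ne].
  by rewrite (negbTE ne) mul0r.
rewrite mul0r big1 // => C' hC'; rewrite /delta.
by case: eqP => [e|]; [rewrite e (negbTE hC) in hC' | rewrite mul0r].
Qed.

Lemma info_off_lin (w : CS -> R) s t :
  info_off pi w s t = \sum_C w C * info_off pi (delta C) s t.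
Proof.
under eq_bigr => C _ do rewrite info_off_delta.
rewrite /info_off big_mkcond mulr_sumr; apply: eq_bigr => C _.
by case: ifP => _ /=; rewrite ?mulr0 ?mul0r; ring.
Qed.

Lemma info_off_sym (w : CS -> R) s t : info_off pi w s t = info_off pi w t s.
Proof.
rewrite /info_off; congr (_ * _); first by rewrite mulrC.
by apply: eq_bigl => C; rewrite andbC.
Qed.

Lemma widen_eq (i : 'I_n) :
  widen_ord (leqnSn n) i = widen_ord (leq_pred n.+1) i.
Proof. exact: val_inj. Qed.

Lemma info_mxE (w : CS -> R) s t : info_mx pi w s t = lapf (info_off pi w) s t.
Proof. by rewrite mxE. Qed.

Lemma info_red_lin (w : CS -> R) :
  info_red pi w = \sum_C w C *: info_red pi (delta C).
Proof.
apply/matrixP => i j; rewrite summxE !mxE.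
under [RHS]eq_bigr => C _ do rewrite !mxE.
case: ifP => _.
  under [RHS]eq_bigr => C _ do rewrite mulrN mulr_sumr big_mkcond.
  rewrite sumrN exchange_big big_mkcond; congr (- _); apply: eq_bigr => t _.
  case: ifP => _; first exact: info_off_lin.
  by rewrite big1.
exact: info_off_lin.
Qed.

Lemma info_red_sym (w : CS -> R) : (info_red pi w)^T = info_red pi w.
Proof.
apply/matrixP => i j; rewrite !mxE.
case: (eqVneq i j) => [-> //|ne].
have ne' : widen_ord (leq_pred n.+1) j != widen_ord (leq_pred n.+1) i.
  by apply: contra ne => /eqP [e]; apply/eqP/val_inj.
rewrite (negbTE ne') eq_sym (negbTE ne'); exact: info_off_sym.
Qed.


Definition ext2 (S : 'M[R]_n) (s t : 'I_n.+1) : R :=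
  match (insub (val s) : option 'I_n), (insub (val t) : option 'I_n) with
  | Some a, Some b => S a b
  | _, _ => 0
  end.

Lemma ext2_widen S i j :
  ext2 S (widen_ord (leqnSn n) i) (widen_ord (leqnSn n) j) = S i j.
Proof. by rewrite /ext2 /= !valK. Qed.

Lemma insub_max : (insub (val (@ord_max n)) : option 'I_n) = None.
Proof. by rewrite insubF // ltnn. Qed.

Lemma ext2_maxl S t : ext2 S ord_max t = 0.
Proof. by rewrite /ext2 insub_max. Qed.

Lemma ext2_maxr S s : ext2 S s ord_max = 0.
Proof. by rewrite /ext2 insub_max; case: insub. Qed.

Lemma ext2_sym S s t : S^T = S -> ext2 S s t = ext2 S t s.
Proof.
move=> sS; rewrite /ext2; case: insub => [a|]; case: insub => [b|] //.
by rewrite -[in LHS]sS mxE.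
Qed.

Lemma sum_ext (F : 'I_n.+1 -> 'I_n.+1 -> R) S :
  \sum_s \sum_t ext2 S s t * F t s =
  \sum_i \sum_j S i j * F (widen_ord (leqnSn n) j) (widen_ord (leqnSn n) i).
Proof.
rewrite big_ord_recr /= [X in _ + X]big1 => [|t _]; last by rewrite ext2_maxl mul0r.
rewrite addr0.
apply: eq_bigr => i _; rewrite big_ord_recr /= ext2_maxr mul0r addr0.
by apply: eq_bigr => j _; rewrite ext2_widen.
Qed.

Lemma trace_red (S : 'M[R]_n) (w : CS -> R) :
  \tr (S *m info_red pi w) =
  \sum_s \sum_t ext2 S s t * lapf (info_off pi w) t s.
Proof.
rewrite sum_ext /mxtrace; apply: eq_bigr => i _; rewrite mxE.
by apply: eq_bigr => j _; rewrite !mxE -!widen_eq.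
Qed.

Lemma Gamma_ext (w : CS -> R) u v :
  Gamma pi w u v = ext2 (Sigma_red pi w) u u + ext2 (Sigma_red pi w) v v
                   - 2 * ext2 (Sigma_red pi w) u v.
Proof.
rewrite /Gamma /ext2 /red_idx.
case: (insub (val u)) => [a|]; case: (insub (val v)) => [b|] /=; ring.
Qed.

Lemma Sigma_sym (w : CS -> R) : (Sigma_red pi w)^T = Sigma_red pi w.
Proof. by rewrite /Sigma_red trmx_inv info_red_sym. Qed.

Lemma RSL_trace (xi : CS -> R) C :
  RSLGamma pi xi C = \tr (Sigma_red pi xi *m info_red pi (delta C)).
Proof.
set Sg := ext2 (Sigma_red pi xi).
have sS : forall s t, Sg s t = Sg t s by move=> s t; apply: ext2_sym; exact: Sigma_sym.
set f := fun s t => - info_off pi (delta C) s t * Gamma pi xi s t.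
have e1 : RSLGamma pi xi C = \sum_(p : upair n.+1) f (val p).1 (val p).2.
  rewrite /RSLGamma mulr_sumr; apply: eq_bigr => p _.
  rewrite /f /S_mx /L_diag /Gamma_vec /R_diag info_off_delta.
  by case: ifP => _ /=; ring.
have fs : forall s t, f s t = f t s.
  by move=> s t; rewrite /f info_off_sym !Gamma_ext -/Sg (sS s t); ring.
apply: (@mulfI _ 2); first by rewrite pnatr_eq0.
rewrite e1 upair_sym // trace_red lap_trace //; last exact: info_off_sym.
apply: eq_bigr => s _; apply: eq_bigr => t _.
by rewrite /f Gamma_ext.
Qed.

End Prob.

Lemma exists_cs n k (a b : 'I_n.+1) : a != b -> (2 <= k)%N -> (k <= n.+1)%N ->
  exists C : choice_set n.+1 k, (a \in val C) && (b \in val C).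
Proof.
move=> ab hk2 hkm.
set e := enum (~: [set a; b]).
set X := [set x in take (k - 2) e].
have ue : uniq e by rewrite /e enum_uniq.
have se : size e = (n.+1 - 2)%N.
  rewrite /e -cardE; have := cardsC [set a; b]; rewrite cards2 ab card_ord.
  move=> h; lia.
have cX : #|X| = (k - 2)%N.
  rewrite /X cardsE (card_uniqP _) ?take_uniq // size_take se.
  case: ltnP => // h; lia.
have nX : forall y, y \in X -> (y != a) && (y != b).
  move=> y; rewrite /X inE => /mem_take; rewrite /e mem_enum !inE negb_or.
  by [].
have T0 : #|a |: (b |: X)| == k.
  rewrite cardsU1 cardsU1 !inE negb_or ab /= cX.
  have -> : (a \notin take (k - 2) e).
    by apply/negP => h; have := nX a; rewrite /X inE => /(_ h); rewrite eqxx.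
  have -> : (b \notin take (k - 2) e).
    by apply/negP => h; have := nX b; rewrite /X inE => /(_ h); rewrite eqxx andbF.
  rewrite /=; apply/eqP; lia.
exists (exist _ (a |: (b |: X)) T0) => /=.
by rewrite !inE !eqxx orbT.
Qed.

Section Prob2.
Variable R : realType.
Variables n k : nat.
Variable pi : 'I_n.+1 -> R.
Hypothesis hpi : forall i, 0 < pi i.
Local Notation CS := (choice_set n.+1 k).

Lemma qf_trace m (A : 'M[R]_m) x : qf A x = \tr (x^T *m x *m A).
Proof.
by rewrite -mulmxA mxtrace_mulC /mxtrace big_ord1 /qf.
Qed.

Lemma xtx_gap (x : 'rV[R]_n) s t :
  0 <= ext2 (x^T *m x) s s + ext2 (x^T *m x) t t - 2 * ext2 (x^T *m x) s t.
Proof.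
rewrite /ext2; case: insub => [a|]; case: insub => [b|];
  rewrite ?mxE ?big_ord1 ?mxE ?mulr0 ?subr0 ?addr0 ?add0r -?expr2 ?sqr_ge0 //.
have -> : x ord0 a ^+ 2 + x ord0 b ^+ 2 - 2 * (x ord0 a * x ord0 b)
  = (x ord0 a - x ord0 b) ^+ 2 by ring.
exact: sqr_ge0.
Qed.

Lemma qf_red (w : CS -> R) x :
  2 * qf (info_red pi w) x = \sum_s \sum_(t | t != s) (- info_off pi w s t) *
   (ext2 (x^T *m x) s s + ext2 (x^T *m x) t t - 2 * ext2 (x^T *m x) s t).
Proof.
rewrite qf_trace trace_red lap_trace //; first exact: info_off_sym.
by move=> s t; apply: ext2_sym; rewrite trmx_mul trmxK.
Qed.

Lemma set_weight_gt0 (C : CS) i : i \in val C -> 0 < set_weight pi C.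
Proof.
move=> iC; rewrite /set_weight (bigD1 i) //=.
by rewrite ltr_wpDr ?hpi // sumr_ge0 // => j _; rewrite ltW.
Qed.

Lemma noff_ge0 (w : CS -> R) (hw : forall C, 0 <= w C) s t :
  0 <= - info_off pi w s t.
Proof.
rewrite /info_off mulNr opprK; apply: mulr_ge0; first by rewrite mulr_ge0 ?ltW.
by apply: sumr_ge0 => C _; rewrite divr_ge0 // sqr_ge0.
Qed.

Lemma info_red_psd (w : CS -> R) (hw : forall C, 0 <= w C) : psd (info_red pi w).
Proof.
split; first exact: info_red_sym.
move=> x; have := qf_red w x => h.
have : 0 <= 2 * qf (info_red pi w) x.
  rewrite h; apply: sumr_ge0 => s _; apply: sumr_ge0 => t _.
  by rewrite mulr_ge0 ?noff_ge0 ?xtx_gap.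
by rewrite pmulr_rge0.
Qed.

Lemma sum_ge_term (I : finType) (P : pred I) (F : I -> R) i0 :
  P i0 -> (forall i, P i -> 0 <= F i) -> F i0 <= \sum_(i | P i) F i.
Proof.
move=> Pi0 hF; rewrite (bigD1 i0) //= ler_wpDr //.
by apply: sumr_ge0 => i /andP[Pi _]; exact: hF.
Qed.

Lemma info_red_pd (w : CS -> R) (hw : forall C, 0 <= w C)
  (hcov : forall i : 'I_n, exists C : CS,
     [&& 0 < w C, widen_ord (leqnSn n) i \in val C & ord_max \in val C]) :
  pd (info_red pi w).
Proof.
split; first exact: info_red_sym.
move=> x x0.
have [j xj] : exists j, x 0 j != 0.
  case: (pickP (fun j => x 0 j != 0)) => [j xj|h]; first by exists j.
  move/negP: x0; case; apply/eqP/rowP => j; move: (h j) => /= /negbFE /eqP ->.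
  by rewrite mxE.
set s0 := widen_ord (leqnSn n) j.
have ne : (ord_max : 'I_n.+1) != s0.
  by rewrite -val_eqE /= neq_ltn ltn_ord orbT.
pose g := fun s t => - info_off pi w s t *
   (ext2 (x^T *m x) s s + ext2 (x^T *m x) t t - 2 * ext2 (x^T *m x) s t).
have hq : 2 * qf (info_red pi w) x = \sum_s \sum_(t | t != s) g s t := qf_red w x.
have g0 : forall s t, 0 <= g s t by move=> s t; rewrite mulr_ge0 ?noff_ge0 ?xtx_gap.
have : 0 < 2 * qf (info_red pi w) x.
  rewrite hq.
  apply: (@lt_le_trans _ _ (g s0 ord_max)); last first.
    apply: (le_trans _ (@sum_ge_term _ xpredT (fun s => \sum_(t | t != s) g s t) s0 isT _)).
      by apply: sum_ge_term => //= t _.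
    by move=> s _; apply: sumr_ge0.
  rewrite /g ext2_maxl ext2_maxr /s0 ext2_widen mulr0 subr0 addr0.
  apply: mulr_gt0; last by rewrite !mxE big_ord1 !mxE lt_def sqr_ge0 andbT mulf_neq0.
  have [C /and3P[wC iC mC]] := hcov j.
  rewrite /info_off mulNr opprK; apply: mulr_gt0; first by rewrite mulr_gt0 ?hpi.
  apply: (lt_le_trans _ (@sum_ge_term _ _ (fun C => w C / set_weight pi C ^+ 2) C _ _)) => //.
  - by rewrite divr_gt0 // exprn_gt0 // (set_weight_gt0 iC).
  - by rewrite iC.
  - by move=> C' _; rewrite divr_ge0 // sqr_ge0.
by rewrite pmulr_rgt0.
Qed.

End Prob2.

Section Main.
Variable R : realType.
Variables n k : nat.
Variable pi : 'I_n.+1 -> R.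
Hypothesis hpi : forall i, 0 < pi i.
Hypothesis hn : (0 < n)%N.
Hypothesis hk2 : (2 <= k)%N.
Hypothesis hkm : (k <= n.+1)%N.
Local Notation CS := (choice_set n.+1 k).

Lemma tr_lin (S : 'M[R]_n) (w : CS -> R) :
  \tr (S *m info_red pi w) = \sum_C w C * \tr (S *m info_red pi (delta R C)).
Proof.
rewrite info_red_lin mulmx_sumr raddf_sum; apply: eq_bigr => C _.
by rewrite /= -scalemxAr mxtraceZ.
Qed.

Lemma info_red_comb (a b : R) (w1 w2 : CS -> R) :
  info_red pi (fun C => a * w1 C + b * w2 C) =
  a *: info_red pi w1 + b *: info_red pi w2.
Proof.
rewrite !info_red_lin !scaler_sumr -big_split /=; apply: eq_bigr => C _.
by rewrite scalerDl !scalerA.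
Qed.

Lemma sum_delta (C : CS) : \sum_(C' : CS) delta R C C' = 1.
Proof.
rewrite (bigD1 C) //= /delta eqxx big1 ?addr0 // => C' ne.
by rewrite (negbTE ne).
Qed.

Definition unif : CS -> R := fun _ => (#|{: CS}|%:R)^-1.

Lemma cs_exists : exists C : CS, true.
Proof.
have ne : widen_ord (leqnSn n) (Ordinal hn) != ord_max.
  by rewrite -val_eqE /= neq_ltn hn.
by have [C _] := exists_cs ne hk2 hkm; exists C.
Qed.

Lemma unif_simplex : in_simplex unif.
Proof.
have c0 : (0 < #|{: CS}|)%N.
  by have [C _] := cs_exists; apply/card_gt0P; exists C.
split; first by move=> C; rewrite /unif invr_ge0 ler0n.
rewrite /unif sumr_const (_ : #|xpredT| = #|{: CS}|) //.
rewrite -[X in X = 1]mulr_natr mulVf //.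
by rewrite pnatr_eq0 -lt0n.
Qed.

Lemma unif_pd : pd (info_red pi unif).
Proof.
apply: info_red_pd => //; first by case: unif_simplex.
move=> i.
have ne : widen_ord (leqnSn n) i != ord_max.
  by rewrite -val_eqE /= neq_ltn ltn_ord.
have [C hC] := exists_cs ne hk2 hkm; exists C; rewrite hC andbT.
have c0 : (0 < #|{: CS}|)%N by apply/card_gt0P; exists C.
by rewrite /unif invr_gt0 ltr0n.
Qed.

Lemma tr_RSL (xi w : CS -> R) :
  \tr (Sigma_red pi xi *m info_red pi w) = \sum_C w C * RSLGamma pi xi C.
Proof.
by rewrite tr_lin; apply: eq_bigr => C _; rewrite RSL_trace.
Qed.

Theorem main (xi : CS -> R) :
  locally_D_optimal pi xi <->
  [/\ in_simplex xi,
      info_red pi xi \in unitmx,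
      (forall C, RSLGamma pi xi C <= n%:R) &
      \sum_C (RSLGamma pi xi C - n%:R) * xi C = 0].
Proof.
set A := info_red pi xi.
have sumeq : info_red pi xi \in unitmx -> in_simplex xi ->
    \sum_C (RSLGamma pi xi C - n%:R) * xi C = 0.
  move=> uA [_ s1].
  have : \tr (Sigma_red pi xi *m A) = n%:R by rewrite /Sigma_red mulVmx // mxtrace1.
  rewrite tr_RSL => h.
  under eq_bigr => C _ do rewrite mulrBl.
  by rewrite sumrB -mulr_sumr s1 mulr1 -h; under eq_bigr => C _ do rewrite mulrC; rewrite subrr.
split.
- move=> [simp opt].
  have du := pd_det_gt0 unif_pd.
  have hd : 0 < \det A.
    have := opt _ unif_simplex; rewrite /logdet_red du.
    by case: ifP => // _; rewrite leeNy_eq.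
  have uA : A \in unitmx by rewrite unitmxE unitfE gt_eqF.
  split => //; last exact: sumeq.
  move=> C; rewrite leNgt; apply/negP => hC.
  set Z := invmx A *m info_red pi (delta R C) - 1%:M.
  have tZ : 0 < \tr Z.
    by rewrite /Z raddfB /= mxtrace1 -RSL_trace subr_gt0.
  have [t [/andP[t0 t1] ht]] := det_grow tZ.
  pose w' := fun C' => (1 - t) * xi C' + t * delta R C C'.
  have simp' : in_simplex w'.
    case: simp => x0 x1; split.
      move=> C'; rewrite /w'; apply: addr_ge0; apply: mulr_ge0.
      - by rewrite subr_ge0.
      - exact: x0.
      - exact: ltW.
      - by rewrite /delta ler0n.
    by rewrite big_split /= -!mulr_sumr x1 sum_delta; ring.
  have Mw : info_red pi w' = A *m (1%:M + t *: Z).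
    rewrite info_red_comb mulmxDr mulmx1 -scalemxAr /Z mulmxBr mulmxA mulmxV //.
    rewrite mul1mx mulmx1 scalerBr scalerBl scale1r; rewrite -/A.
    by rewrite addrCA addrC -addrA (addrC (- _)).
  have dw : \det (info_red pi w') = \det A * \det (1%:M + t *: Z).
    by rewrite Mw det_mulmx.
  have dw0 : 0 < \det (info_red pi w') by rewrite dw mulr_gt0 // (lt_trans ltr01).
  have := opt _ simp'; rewrite /logdet_red dw0 hd lee_fin ler_ln ?posrE //.
  rewrite dw -[X in _ <= X]mulr1 ler_pM2l //.
  by rewrite leNgt ht.
- move=> [simp uA hb hs]; split => // w' hw'.
  have pdA : pd A := psd_unit_pd (info_red_psd hpi (proj1 simp)) uA.
  have dA := pd_det_gt0 pdA.
  rewrite /logdet_red; case: ifP => hB; last exact: leNye.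
  rewrite -/A dA lee_fin ler_ln ?posrE //.
  have uB : info_red pi w' \in unitmx by rewrite unitmxE unitfE gt_eqF.
  have pdB := psd_unit_pd (info_red_psd hpi (proj1 hw')) uB.
  apply: pd_det_le => //.
  have -> : invmx A = Sigma_red pi xi by [].
  rewrite tr_RSL.
  apply: (@le_trans _ _ (\sum_C w' C * n%:R)).
    by apply: ler_sum => C _; rewrite ler_wpM2l //; case: hw' => h _; exact: h.
  by rewrite -mulr_suml (proj2 hw') mul1r.
Qed.

End Main.

Unset Implicit Arguments.

Theorem theorem3p4 (R : realType) (m k : nat) (pi : 'I_m -> R)
  (hm : (2 <= m)%N) (hk2 : (2 <= k)%N) (hkm : (k <= m)%N)
  (hpi : forall i, 0 < pi i) (xi : choice_set m k -> R) :
  locally_D_optimal pi xi <->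
  [/\ in_simplex xi,
      info_red pi xi \in unitmx,
      (forall C, RSLGamma pi xi C <= (m.-1)%:R) &
      \sum_C (RSLGamma pi xi C - (m.-1)%:R) * xi C = 0].
Proof.
move: pi hpi xi hkm; case: m hm => [//|n] hm pi hpi xi hkm.
exact: (main hpi hm hk2 hkm xi).
Qed.
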